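(* Consider the IMAB model with $K=2$ arms, $\mathcal{X}_1=\mathcal{X}_2=\{0,1\}$, Bernoulli parameters $p_i=p_i(1)\in[\frac25,\frac12]$ with $p_2<p_1<\frac12$, and let $\Delta=h_b(p_1)-h_b(p_2)$. Run the generic UCB algorithm with the plug-in estimator $\hat H(\boldsymbol Y,n)=h_b(\hat p(\boldsymbol Y,n))$, the upper confidence deviation $\mathrm{UCD}(\boldsymbol Y,\delta,n)=\mathrm{UCD}^{(1/2)}_{\mathrm{ber}}(\hat p(\boldsymbol Y,n),\delta,n)$, and $\delta_\alpha(t)=4t^{-\alpha}$ with $\alpha>2$. Then for every $t\ge 2$, \[ R(t)\leq \frac{784(\frac12-p_2)^2\alpha\log t}{\Delta}+60\alpha\log t+\frac{8(\alpha-1)}{\alpha-2}\Delta. \]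
   Context: IMAB model: there are $K\ge2$ arms; arm $i$ emits i.i.d. symbols from an unknown PMF $p_i$ on a finite alphabet $\mathcal{X}_i$, independently across rounds and arms. $H_i:=H(p_i)$ (natural log), $i^*\in\arg\max_i H_i$, $\Delta_i:=H_{i^*}-H_i$. Generic UCB algorithm: given an estimator $\hat H(\boldsymbol Y,n)$, an upper confidence deviation $\mathrm{UCD}(\boldsymbol Y,\delta,n)$ and a confidence function $\delta_\alpha(t)$, at each round $t=1,2,\ldots$ the player plays $I(t)\in\arg\max_{i\in[K]}\{\hat H(\boldsymbol X_i(t-1),N_i(t-1))+\mathrm{UCD}(\boldsymbol X_i(t-1),\delta_\alpha(t),N_i(t-1))\}$ (ties broken arbitrarily; an arm whose index is undefined, e.g. with $N_i(t-1)=0$, is treated as having index $+\infty$), where $\boldsymbol X_i(t-1)$ is the tuple of symbols observed from arm $i$ before round $t$ and $N_i(t-1)$ its length; it then observes a fresh symbol from $p_{I(t)}$, appended to $\boldsymbol X_{I(t)}$. $N_i(t)$ is the number of plays of arm $i$ in rounds $1,\ldots,t$. Pseudo-regret: $R(t):=\sum_{i:\Delta_i>0}\mathbb{E}[N_i(t)]\Delta_i$. $h_b(p):=-p\log p-(1-p)\log(1-p)$; $\hat p(\boldsymbol Y,n)$ is the empirical frequency of $1$ in $\boldsymbol Y$. $\mathrm{UCD}^{(1/2)}_{\mathrm{ber}}(q,\delta,n):=7|\frac12-q|\sqrt{\log(4/\delta)/n}+9\log(4/\delta)/n$. *)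

(* Defs.v *)
From Stdlib Require Import Reals List.
Import ListNotations.
Open Scope R_scope.

Inductive arm := A1 | A2.

Definition arm_eqb (a b : arm) : bool :=
  match a, b with A1, A1 | A2, A2 => true | _, _ => false end.

Definition other (a : arm) : arm := match a with A1 => A2 | A2 => A1 end.

(* A history: the sequence of (played arm, observed symbol) in rounds
   1, 2, ...; the symbol [true] stands for 1 and [false] for 0. *)
Definition history := list (arm * bool).

(* binary entropy in nats (with 0 log 0 = 0, since Stdlib's ln 0 = 0) *)
Definition hb (p : R) : R := - p * ln p - (1 - p) * ln (1 - p).

Definition count_plays (a : arm) (h : history) : nat :=
  length (filter (fun x => arm_eqb (fst x) a) h).

Definition count_ones (a : arm) (h : history) : nat :=
  length (filter (fun x => arm_eqb (fst x) a && snd x)%bool h).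

Definition phat (a : arm) (h : history) : R :=
  INR (count_ones a h) / INR (count_plays a h).

Definition ucd_ber_half (q delta : R) (n : nat) : R :=
  7 * Rabs (1/2 - q) * sqrt (ln (4 / delta) / INR n) + 9 * ln (4 / delta) / INR n.

Definition delta_alpha (alpha : R) (t : nat) : R := 4 * Rpower (INR t) (- alpha).

(* UCB index of arm a at round t = length h + 1 (meaningful when N_a > 0):
   plug-in estimate h_b(phat) plus UCD^{(1/2)}_ber(phat, delta_alpha(t), N_a). *)
Definition ucb_index (alpha : R) (a : arm) (h : history) : R :=
  hb (phat a h)
  + ucd_ber_half (phat a h) (delta_alpha alpha (S (length h))) (count_plays a h).

(* [a] is an admissible choice of the generic UCB algorithm after history h:
   a maximizes the index, where an arm with no observations has index +oo. *)
Definition is_ucb_choice (alpha : R) (h : history) (a : arm) : Prop :=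
  count_plays a h = 0%nat \/
  (count_plays (other a) h <> 0%nat /\
   ucb_index alpha (other a) h <= ucb_index alpha a h).

Definition param (p1 p2 : R) (a : arm) : R := match a with A1 => p1 | A2 => p2 end.

(* Expected number of plays of arm i in the next r rounds, starting from
   history h, when the player follows the selection rule [sel] and each play
   of arm a yields a fresh symbol 1 with probability pa a, 0 otherwise. *)
Fixpoint exp_plays (pa : arm -> R) (sel : history -> arm) (i : arm)
    (h : history) (r : nat) : R :=
  match r with
  | O => 0
  | S r' =>
      let a := sel h in
      (if arm_eqb a i then 1 else 0)
      + pa a * exp_plays pa sel i (h ++ [(a, true)]) r'
      + (1 - pa a) * exp_plays pa sel i (h ++ [(a, false)]) r'
  end.

Definition expected_N (pa : arm -> R) (sel : history -> arm) (i : arm) (t : nat) : R :=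
  exp_plays pa sel i [] t.

Definition entropy (pa : arm -> R) (i : arm) : R := hb (pa i).
Definition gap (pa : arm -> R) (i : arm) : R :=
  Rmax (entropy pa A1) (entropy pa A2) - entropy pa i.

Definition regret (pa : arm -> R) (sel : history -> arm) (t : nat) : R :=
  (if Rlt_dec 0 (gap pa A1) then expected_N pa sel A1 t * gap pa A1 else 0)
  + (if Rlt_dec 0 (gap pa A2) then expected_N pa sel A2 t * gap pa A2 else 0).

(* Main.v *)
Require Import Defs.
From Stdlib Require Import Reals Lra Lia Psatz List ZArith.
From Coquelicot Require Import Coquelicot.
Import ListNotations.
Require Import Defs.
Open Scope R_scope.

Lemma hb_derive x : 0 < x < 1 ->
  derivable_pt_lim hb x (ln (1 - x) - ln x).
Proof.
  intros [H0 H1]. apply is_derive_Reals. unfold hb.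
  auto_derive.
  - split; [lra|]. split; [lra|]. exact I.
  - replace (1 + - x) with (1 - x) by ring. field. lra.
Qed.

Lemma hb_mvt a b : 0 < a -> a < b -> b < 1 ->
  exists c, hb b - hb a = (ln (1 - c) - ln c) * (b - a) /\ a < c < b.
Proof.
  intros Ha Hab Hb. apply MVT_cor2; auto.
  intros c Hc. apply hb_derive. lra.
Qed.

Lemma hb_sym q : hb (1 - q) = hb q.
Proof. unfold hb. replace (1 - (1 - q)) with q by ring. ring. Qed.

Lemma ln_neg x : 0 <= x <= 1 -> ln x <= 0.
Proof.
  intros [H0 H1]. destruct (Req_dec x 0) as [->|Hx].
  - unfold ln. destruct (Rlt_dec 0 0) as [h|h]. exfalso; lra. lra.
  - rewrite <- ln_1. apply ln_le; lra.
Qed.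

Lemma hb_nonneg q : 0 <= q <= 1 -> 0 <= hb q.
Proof.
  intros H. unfold hb. pose proof (ln_neg q H). pose proof (ln_neg (1-q) ltac:(lra)).
  nra.
Qed.

Lemma hb_mono a b : 0 <= a -> a <= b -> b <= 1/2 -> hb a <= hb b.
Proof.
  intros Ha Hab Hb.
  destruct (Req_dec a b) as [->|Hne]; [lra|].
  destruct (Req_dec a 0) as [->|Ha0].
  - replace (hb 0) with 0. apply hb_nonneg; lra.
    unfold hb. rewrite Rminus_0_r, ln_1. ring.
  - destruct (hb_mvt a b) as [c [Hc Hc2]]; try lra.
    assert (ln c <= ln (1 - c)) by (apply ln_le; lra). nra.
Qed.

Lemma hb_mono_strict a b : 0 < a -> a < b -> b < 1/2 -> hb a < hb b.
Proof.
  intros Ha Hab Hb.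
  destruct (hb_mvt a b) as [c [Hc Hc2]]; try lra.
  assert (ln c < ln (1 - c)) by (apply ln_increasing; lra). nra.
Qed.

Lemma ln_half_bound X : 1 <= X -> ln X <= (X - / X) / 2.
Proof.
  intros HX. destruct (Req_dec X 1) as [->|HX1].
  - rewrite ln_1, Rinv_1. lra.
  - set (g := fun y => (y - / y) / 2 - ln y).
    destruct (MVT_cor2 g (fun y => (1 + / (y*y)) / 2 - / y) 1 X) as [c [Hc Hc2]]; try lra.
    + intros c Hc. apply is_derive_Reals. unfold g. auto_derive.
      * split; [lra|]. split; [lra|]. exact I.
      * field. lra.
    + unfold g in Hc. rewrite ln_1, Rinv_1 in Hc.
      assert (0 <= (1 + / (c * c)) / 2 - / c).
      { replace ((1 + / (c * c)) / 2 - / c) with ((c - 1) * (c - 1) / (2 * (c * c))) by (field; lra).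
        apply Rmult_le_pos; [nra|]. left. apply Rinv_0_lt_compat. nra. }
      nra.
Qed.

Lemma ln2_le : ln 2 <= 3/4.
Proof. pose proof (ln_half_bound 2 ltac:(lra)). lra. Qed.

Lemma hb_half : hb (1/2) = ln 2.
Proof.
  unfold hb. replace (1 - 1/2) with (/2) by field. replace (1/2) with (/2) by field.
  rewrite ln_Rinv by lra. field.
Qed.

Lemma hb_le_ln2 q : 0 <= q <= 1 -> hb q <= ln 2.
Proof.
  intros H. rewrite <- hb_half.
  destruct (Rle_dec q (1/2)).
  - apply hb_mono; lra.
  - rewrite <- hb_sym. apply hb_mono; lra.
Qed.

Lemma poly1 y r : 0 < y -> y <= 1/10 + r -> 0 <= r -> r * r <= 1/12 ->
  4 * y <= (1 - 4 * y * y) * (7 * y + 9 * r).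
Proof.
  intros Hy Hyr Hr Hrr.
  assert (Hr1 : r < 29/100) by nra.
  assert (Hy1 : y < 39/100) by lra.
  assert (H4 : 0 < 1 - 4 * y * y) by nra.
  destruct (Rle_dec y (327/1000)).
  - assert (3 * y - 28 * y * y * y >= 0) by nra.
    assert (0 <= 9 * r * (1 - 4 * y * y)) by nra. nra.
  - assert (9 * (y - 1/10) * (1 - 4 * y * y) <= 9 * r * (1 - 4 * y * y)) by nra.
    assert (12 * y - 64 * y * y * y + 36/10 * y * y - 9/10 >= 0) by nra.
    nra.
Qed.

Lemma lnratio_bound q : 0 < q <= 1/2 ->
  ln (1 - q) - ln q <= (1 - 2 * q) / (2 * q * (1 - q)).
Proof.
  intros Hq. rewrite <- ln_div by lra.
  eapply Rle_trans. apply ln_half_bound.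
  - apply (Rmult_le_reg_r q); [lra|]. unfold Rdiv. rewrite Rmult_assoc, Rinv_l by lra. lra.
  - right. field. lra.
Qed.

Lemma key1a p q r : 2/5 <= p <= 1/2 -> 0 <= q <= 1/2 -> 0 <= r -> 9 * r^2 < 3/4 ->
  p - q < r -> hb p <= hb q + 7 * (1/2 - q) * r + 9 * r^2.
Proof.
  intros Hp Hq Hr Hrr Hpq.
  destruct (Rle_dec p q).
  - assert (hb p <= hb q) by (apply hb_mono; lra). nra.
  - assert (Hr1 : r < 29/100) by nra.
    destruct (hb_mvt q p) as [c [Hc Hc2]]; try lra.
    assert (H1 : ln (1 - c) - ln c <= ln (1 - q) - ln q).
    { assert (ln (1-c) <= ln (1-q)) by (apply ln_le; lra).
      assert (ln q <= ln c) by (apply ln_le; lra). lra. }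
    assert (H2 : 0 <= ln (1 - c) - ln c).
    { assert (ln c <= ln (1-c)) by (apply ln_le; lra). lra. }
    pose proof (lnratio_bound q ltac:(lra)) as H3.
    assert (H4 : (1 - 2 * q) / (2 * q * (1 - q)) <= 7 * (1/2 - q) + 9 * r).
    { destruct (Req_dec q (1/2)) as [->|Hq2].
      - replace (1 - 2 * (1/2)) with 0 by field. unfold Rdiv. rewrite Rmult_0_l. lra.
      - pose proof (poly1 (1/2 - q) r ltac:(lra) ltac:(lra) Hr ltac:(nra)).
        apply (Rmult_le_reg_r (2 * q * (1 - q))); [nra|].
        unfold Rdiv. rewrite Rmult_assoc, Rinv_l by nra. nra. }
    assert (hb p - hb q <= (7 * (1/2 - q) + 9 * r) * r).
    { rewrite Hc. apply Rle_trans with ((7 * (1/2 - q) + 9 * r) * (p - q)).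
      - apply Rmult_le_compat_r; lra.
      - apply Rmult_le_compat_l; nra. }
    nra.
Qed.

Lemma key1 p q r : 2/5 <= p <= 1/2 -> 0 <= q <= 1 -> 0 <= r ->
  (3/4 <= 9 * r^2 \/ Rabs (q - p) < r) ->
  hb p <= hb q + 7 * Rabs (1/2 - q) * r + 9 * r^2.
Proof.
  intros Hp Hq Hr Hor.
  pose proof (hb_nonneg q Hq). pose proof (Rabs_pos (1/2 - q)).
  assert (0 <= 7 * Rabs (1/2 - q) * r) by (apply Rmult_le_pos; lra).
  destruct (Rle_dec (3/4) (9 * r^2)).
  - pose proof (hb_le_ln2 p ltac:(lra)). pose proof ln2_le. lra.
  - destruct Hor as [Hor|Hor]; [lra|].
    apply Rabs_def2 in Hor. destruct Hor as [Ha Hb].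
    destruct (Rle_dec q (1/2)).
    + rewrite Rabs_right by lra. apply key1a; lra.
    + rewrite Rabs_left by lra. destruct (Rle_dec (1 - p) q).
      * rewrite <- (hb_sym q). replace (- (1/2 - q)) with (1/2 - (1 - q)) by field.
        apply key1a; lra.
      * rewrite <- (hb_sym q). assert (hb p <= hb (1 - q)) by (apply hb_mono; lra).
        nra.
Qed.

Lemma key2a p2 q r : 2/5 <= p2 < 1/2 -> p2 <= q <= 1/2 -> q - p2 < r ->
  hb q - hb p2 <= (ln (1 - p2) - ln p2) * r.
Proof.
  intros Hp Hq Hr.
  assert (H2 : 0 <= ln (1 - p2) - ln p2).
  { assert (ln p2 <= ln (1-p2)) by (apply ln_le; lra). lra. }
  destruct (Req_dec p2 q) as [<-|Hne].
  - replace (hb p2 - hb p2) with 0 by ring. nra.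
  - destruct (hb_mvt p2 q) as [c [Hc Hc2]]; try lra.
    assert (H1 : ln (1 - c) - ln c <= ln (1 - p2) - ln p2).
    { assert (ln (1-c) <= ln (1-p2)) by (apply ln_le; lra).
      assert (ln p2 <= ln c) by (apply ln_le; lra). lra. }
    assert (H3 : 0 <= ln (1 - c) - ln c).
    { assert (ln c <= ln (1-c)) by (apply ln_le; lra). lra. }
    rewrite Hc. apply Rle_trans with ((ln (1 - p2) - ln p2) * (q - p2)).
    + apply Rmult_le_compat_r; lra.
    + apply Rmult_le_compat_l; lra.
Qed.

Lemma key2 p2 D r q : 2/5 <= p2 < 1/2 -> 0 < D -> 0 <= r ->
  (1/2 - p2) * r <= D / 28 -> r * r <= D / 60 -> 0 <= q <= 1 ->
  Rabs (q - p2) < r ->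
  hb q + 7 * Rabs (1/2 - q) * r + 9 * r^2 < hb p2 + D.
Proof.
  intros Hp HD Hr Hdr Hrr Hq Hqp.
  set (K := ln (1 - p2) - ln p2).
  assert (HK0 : 0 <= K).
  { unfold K. assert (ln p2 <= ln (1-p2)) by (apply ln_le; lra). lra. }
  assert (HK : K <= 25/6 * (1/2 - p2)).
  { unfold K. eapply Rle_trans. apply lnratio_bound; lra.
    apply (Rmult_le_reg_r (2 * p2 * (1 - p2))); [nra|].
    unfold Rdiv. rewrite Rmult_assoc, Rinv_l by nra.
    assert (0 <= (p2 - 2/5) * (3/5 - p2)) by nra.
    assert (0 <= (1/2 - p2) * ((p2 - 2/5) * (3/5 - p2))) by nra. nra. }
  apply Rabs_def2 in Hqp. destruct Hqp as [Ha Hb].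
  assert (Hdiff : hb q - hb p2 <= K * r).
  { destruct (Rle_dec q p2).
    - assert (hb q <= hb p2) by (apply hb_mono; lra). nra.
    - destruct (Rle_dec q (1/2)).
      + apply key2a; lra.
      + destruct (Rle_dec (1 - p2) q).
        * rewrite <- (hb_sym q). assert (hb (1 - q) <= hb p2) by (apply hb_mono; lra). nra.
        * rewrite <- (hb_sym q). apply key2a; lra. }
  assert (Habs : Rabs (1/2 - q) <= (1/2 - p2) + r).
  { apply Rabs_le. lra. }
  assert (7 * Rabs (1/2 - q) * r <= 7 * ((1/2 - p2) + r) * r).
  { apply Rmult_le_compat_r; [lra|]. lra. }
  assert (K * r <= 25/6 * (1/2 - p2) * r) by nra.
  nra.
Qed.

Fixpoint E (p : R) (L : nat) (f : list bool -> R) : R :=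
  match L with
  | O => f []
  | S L => p * E p L (fun x => f (true :: x)) + (1 - p) * E p L (fun x => f (false :: x))
  end.

Lemma E_ext p L f g : (forall x, f x = g x) -> E p L f = E p L g.
Proof.
  revert f g; induction L; intros f g H; simpl; auto.
  rewrite (IHL (fun x => f (true :: x)) (fun x => g (true :: x))), (IHL (fun x => f (false :: x)) (fun x => g (false :: x))); auto.
Qed.

Lemma E_le p L f g : 0 <= p <= 1 -> (forall x, f x <= g x) -> E p L f <= E p L g.
Proof.
  revert f g; induction L; intros f g Hp H; simpl; auto.
  pose proof (IHL (fun x => f (true :: x)) (fun x => g (true :: x)) Hp (fun x => H _)).
  pose proof (IHL (fun x => f (false :: x)) (fun x => g (false :: x)) Hp (fun x => H _)).
  apply Rplus_le_compat; apply Rmult_le_compat_l; lra.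
Qed.

Lemma E_const p L c : E p L (fun _ => c) = c.
Proof. induction L; simpl; auto. rewrite IHL. ring. Qed.

Lemma E_plus p L f g : E p L (fun x => f x + g x) = E p L f + E p L g.
Proof.
  revert f g; induction L; intros f g; simpl; auto.
  rewrite (IHL (fun x => f (true :: x))), (IHL (fun x => f (false :: x))). ring.
Qed.

Lemma E_scal p L c f : E p L (fun x => c * f x) = c * E p L f.
Proof.
  revert f; induction L; intros f; simpl; auto.
  rewrite (IHL (fun x => f (true :: x))), (IHL (fun x => f (false :: x))). ring.
Qed.

Fixpoint sumR (n : nat) (f : nat -> R) : R :=
  match n with O => 0 | S n => sumR n f + f n end.

Lemma E_sum p L n (f : nat -> list bool -> R) :
  E p L (fun x => sumR n (fun k => f k x)) = sumR n (fun k => E p L (f k)).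
Proof.
  induction n; simpl.
  - apply E_const.
  - rewrite E_plus, IHn. reflexivity.
Qed.

Lemma sumR_le n f g : (forall k, (k < n)%nat -> f k <= g k) -> sumR n f <= sumR n g.
Proof.
  induction n; intros H; simpl; [lra|].
  apply Rplus_le_compat; [apply IHn; intros; apply H; lia| apply H; lia].
Qed.

Lemma sumR_nonneg n f : (forall k, (k < n)%nat -> 0 <= f k) -> 0 <= sumR n f.
Proof.
  intros H. apply Rle_trans with (sumR n (fun _ => 0)).
  - clear H; induction n; simpl; lra.
  - apply sumR_le; auto.
Qed.

Lemma sumR_ge_term n f k : (forall k, (k < n)%nat -> 0 <= f k) -> (k < n)%nat -> f k <= sumR n f.
Proof.
  induction n; intros H Hk; [lia|]. simpl.
  destruct (Nat.eq_dec k n) as [->|Hne].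
  - pose proof (sumR_nonneg n f (fun j Hj => H j ltac:(lia))). lra.
  - pose proof (IHn (fun j Hj => H j ltac:(lia)) ltac:(lia)). pose proof (H n ltac:(lia)). lra.
Qed.

Lemma sumR_plus n f g : sumR n (fun k => f k + g k) = sumR n f + sumR n g.
Proof. induction n; simpl; [ring|]. rewrite IHn. ring. Qed.

Lemma sumR_indic n c : sumR (S n) (fun k => if Nat.eq_dec k 0 then 0 else c) = INR n * c.
Proof.
  induction n; simpl.
  - destruct (Nat.eq_dec 0 0); [|lia]. simpl. ring.
  - simpl in IHn. rewrite IHn. destruct (Nat.eq_dec (S n) 0); [lia|].
    destruct n; simpl; ring.
Qed.

Fixpoint Sc (n : nat) (x : list bool) : nat :=
  match n, x with
  | O, _ => O
  | S n, [] => O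
  | S n, b :: x => ((if b then 1 else 0) + Sc n x)%nat
  end.

Lemma Sc_le n x : (Sc n x <= n)%nat.
Proof.
  revert x; induction n; intros [|b x]; simpl; try lia.
  specialize (IHn x). destruct b; lia.
Qed.



Lemma Sc_succ n x : Sc (S n) x = (Sc n x + (if nth n x false then 1 else 0))%nat.
Proof.
  revert x; induction n; intros [|b x].
  - reflexivity.
  - destruct b; reflexivity.
  - simpl. destruct n; reflexivity.
  - change (Sc (S (S n)) (b :: x)) with ((if b then 1 else 0) + Sc (S n) x)%nat.
    rewrite IHn. change (Sc (S n) (b :: x)) with ((if b then 1 else 0) + Sc n x)%nat.
    change (nth (S n) (b :: x) false) with (nth n x false). lia.
Qed.

Lemma E_exp_prod p L n mu : (n <= L)%nat ->
  E p L (fun x => exp (mu * INR (Sc n x))) = (p * exp mu + (1 - p)) ^ n.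
Proof.
  revert L; induction n; intros L HL.
  - simpl. rewrite (E_ext _ _ _ (fun _ => 1)). apply E_const.
    intros x. destruct x; simpl; rewrite Rmult_0_r, exp_0; reflexivity.
  - destruct L; [lia|]. cbn [E].
    rewrite (E_ext _ _ _ (fun x => exp mu * exp (mu * INR (Sc n x)))).
    2:{ intros x. rewrite <- exp_plus. f_equal.
        change (Sc (S n) (true :: x)) with (S (Sc n x)). rewrite S_INR. ring. }
    rewrite (E_ext p L (fun x => exp (mu * INR (Sc (S n) (false :: x)))) (fun x => exp (mu * INR (Sc n x)))).
    2:{ intros x. reflexivity. }
    rewrite E_scal, IHn by lia. simpl. ring.
Qed.

Lemma exp_quad x : x <= 38/100 -> exp x <= 1 + x + x^2.
Proof.
  intros Hx. destruct (Rle_dec x 0).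
  - pose proof (exp_ineq1_le (- x)).
    assert (exp x * exp (- x) = 1) by (rewrite <- exp_plus; replace (x + - x) with 0 by ring; apply exp_0).
    pose proof (exp_pos x). nra.
  - pose proof (exp_ineq1_le (- (x/2))).
    assert (Hm : exp (x/2) * exp (- (x/2)) = 1) by (rewrite <- exp_plus; replace (x/2 + - (x/2)) with 0 by ring; apply exp_0).
    assert (He : exp x = exp (x/2) * exp (x/2)) by (rewrite <- exp_plus; f_equal; field).
    pose proof (exp_pos (x/2)).
    assert (Hb : exp (x/2) <= / (1 - x/2)).
    { apply (Rmult_le_reg_r (1 - x/2)); [lra|]. rewrite Rinv_l by lra. nra. }
    assert (H1 : 0 <= / (1 - x/2)) by (left; apply Rinv_0_lt_compat; lra).
    assert (exp x <= / (1 - x/2) * / (1 - x/2)) by (rewrite He; apply Rmult_le_compat; lra).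
    assert (/ (1 - x/2) * / (1 - x/2) <= 1 + x + x^2).
    { apply (Rmult_le_reg_r ((1 - x/2) * (1 - x/2))); [nra|].
      replace (/ (1 - x / 2) * / (1 - x / 2) * ((1 - x / 2) * (1 - x / 2))) with 1 by (field; lra).
      assert (0 <= x * x * (1 - 3 * x + x * x)) by (apply Rmult_le_pos; nra). nra. }
    lra.
Qed.

Lemma mgf_bound p mu : 0 <= p <= 1 -> mu * (1 - p) <= 38/100 -> - mu * p <= 38/100 ->
  p * exp (mu * (1 - p)) + (1 - p) * exp (- mu * p) <= 1 + mu^2 * p * (1 - p).
Proof.
  intros Hp H1 H2.
  pose proof (exp_quad _ H1). pose proof (exp_quad _ H2).
  apply Rle_trans with (p * (1 + mu * (1 - p) + (mu * (1 - p))^2) + (1 - p) * (1 + - mu * p + (- mu * p)^2)).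
  - apply Rplus_le_compat; apply Rmult_le_compat_l; lra.
  - right. ring.
Qed.

Lemma exp_pow a n : exp (INR n * a) = exp a ^ n.
Proof.
  induction n.
  - simpl. rewrite Rmult_0_l. apply exp_0.
  - rewrite S_INR. change (exp a ^ S n) with (exp a * exp a ^ n).
    rewrite <- IHn, <- exp_plus. f_equal. ring.
Qed.

Lemma gen_chernoff p L n mu : 0 <= p <= 1 -> mu * (1 - p) <= 38/100 -> - mu * p <= 38/100 ->
  (n <= L)%nat ->
  E p L (fun x => exp (mu * (INR (Sc n x) - INR n * p))) <= exp (INR n * (mu^2 / 4)).
Proof.
  intros Hp H1 H2 HL.
  rewrite (E_ext _ _ _ (fun x => exp (INR n * (- mu * p)) * exp (mu * INR (Sc n x)))).
  2:{ intros x. rewrite <- exp_plus. f_equal. ring. }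
  rewrite E_scal, E_exp_prod by auto. rewrite !exp_pow, <- Rpow_mult_distr.
  apply pow_incr. split.
  - pose proof (exp_pos mu). apply Rmult_le_pos; [left; apply exp_pos| nra].
  - apply Rle_trans with (p * exp (mu * (1 - p)) + (1 - p) * exp (- mu * p)).
    + right. replace (mu * (1 - p)) with (mu + - mu * p) by ring. rewrite exp_plus. ring.
    + eapply Rle_trans. apply mgf_bound; auto.
      eapply Rle_trans; [|apply exp_ineq1_le].
      assert (0 <= mu^2) by (apply pow2_ge_0). assert (p * (1 - p) <= 1/4) by (pose proof (pow2_ge_0 (p - 1/2)); nra).
      assert (0 <= mu^2 * (1/4 - p * (1 - p))) by (apply Rmult_le_pos; lra). nra.
Qed.

Lemma chernoff_tail p L n mu c : 0 <= p <= 1 -> mu * (1 - p) <= 38/100 -> - mu * p <= 38/100 ->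
  (n <= L)%nat ->
  E p L (fun x => if Rle_dec (INR n * c) (mu * (INR (Sc n x) - INR n * p)) then 1 else 0)
  <= exp (INR n * (mu^2 / 4) - INR n * c).
Proof.
  intros Hp H1 H2 HL.
  apply Rle_trans with (E p L (fun x => exp (- (INR n * c)) * exp (mu * (INR (Sc n x) - INR n * p)))).
  - apply E_le; auto. intros x. destruct (Rle_dec _ _).
    + rewrite <- exp_plus. eapply Rle_trans; [|apply exp_ineq1_le]. lra.
    + rewrite <- exp_plus. left. apply exp_pos.
  - rewrite E_scal. eapply Rle_trans.
    + apply Rmult_le_compat_l; [left; apply exp_pos|]. apply gen_chernoff; eauto.
    + rewrite <- exp_plus. right. f_equal. ring.
Qed.

Definition tab (x1 x2 : list bool) (a : arm) := match a with A1 => x1 | A2 => x2 end.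

Fixpoint cntN (sel : history -> arm) (i : arm) (h : history) (x1 x2 : list bool) (r : nat) : R :=
  match r with
  | O => 0
  | S r' => let a := sel h in
      (if arm_eqb a i then 1 else 0) +
      cntN sel i (h ++ [(a, nth (count_plays a h) (tab x1 x2 a) false)]) x1 x2 r'
  end.

Lemma count_plays_app a a' b h :
  count_plays a (h ++ [(a', b)]) = (count_plays a h + if arm_eqb a' a then 1 else 0)%nat.
Proof.
  unfold count_plays. rewrite filter_app, length_app. simpl.
  destruct (arm_eqb a' a); simpl; lia.
Qed.

Lemma count_ones_app a a' b h :
  count_ones a (h ++ [(a', b)]) = (count_ones a h + if (arm_eqb a' a && b)%bool then 1 else 0)%nat.
Proof.
  unfold count_ones. rewrite filter_app, length_app. simpl.
  destruct (arm_eqb a' a && b)%bool; simpl; lia.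
Qed.

Lemma equiv p1 p2 sel i : forall r h pre1 pre2 L1 L2,
  length pre1 = count_plays A1 h -> length pre2 = count_plays A2 h ->
  (r <= L1)%nat -> (r <= L2)%nat ->
  exp_plays (param p1 p2) sel i h r =
  E p1 L1 (fun x1 => E p2 L2 (fun x2 => cntN sel i h (pre1 ++ x1) (pre2 ++ x2) r)).
Proof.
  induction r; intros h pre1 pre2 L1 L2 H1 H2 HL1 HL2.
  - simpl. rewrite (E_ext _ _ _ (fun _ => 0)). now rewrite E_const.
    intros x. apply E_const.
  - cbn [exp_plays cntN]. destruct (sel h) eqn:Ha.
    + destruct L1 as [|L1]; [lia|]. cbn [E].
      assert (Hb : forall b, E p1 L1 (fun x1 => E p2 L2 (fun x2 =>
                 (if arm_eqb A1 i then 1 else 0) +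
                 cntN sel i (h ++ [(A1, nth (count_plays A1 h) (tab (pre1 ++ b :: x1) (pre2 ++ x2) A1) false)])
                   (pre1 ++ b :: x1) (pre2 ++ x2) r))
              = (if arm_eqb A1 i then 1 else 0) + exp_plays (param p1 p2) sel i (h ++ [(A1, b)]) r).
      { intros b. rewrite (IHr (h ++ [(A1, b)]) (pre1 ++ [b]) pre2 L1 L2).
        - rewrite (E_ext p1 L1 _ (fun x1 => (if arm_eqb A1 i then 1 else 0) + E p2 L2 (fun x2 =>
              cntN sel i (h ++ [(A1, b)]) ((pre1 ++ [b]) ++ x1) (pre2 ++ x2) r))).
          + rewrite E_plus, E_const. reflexivity.
          + intros x1. rewrite E_plus, E_const. f_equal. apply E_ext. intros x2.
            simpl tab. rewrite <- H1, app_nth2, Nat.sub_diag by lia. simpl.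
            rewrite <- app_assoc. reflexivity.
        - rewrite length_app, count_plays_app. simpl. lia.
        - rewrite count_plays_app. simpl. lia.
        - lia.
        - lia. }
      rewrite !Hb. simpl param. ring.
    + destruct L2 as [|L2]; [lia|]. cbn [E].
      rewrite E_plus, !E_scal.
      assert (Hb : forall b, E p1 L1 (fun x1 => E p2 L2 (fun x2 =>
                 (if arm_eqb A2 i then 1 else 0) +
                 cntN sel i (h ++ [(A2, nth (count_plays A2 h) (tab (pre1 ++ x1) (pre2 ++ b :: x2) A2) false)])
                   (pre1 ++ x1) (pre2 ++ b :: x2) r))
              = (if arm_eqb A2 i then 1 else 0) + exp_plays (param p1 p2) sel i (h ++ [(A2, b)]) r).
      { intros b. rewrite (IHr (h ++ [(A2, b)]) pre1 (pre2 ++ [b]) L1 L2).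
        - rewrite (E_ext p1 L1 _ (fun x1 => (if arm_eqb A2 i then 1 else 0) + E p2 L2 (fun x2 =>
              cntN sel i (h ++ [(A2, b)]) (pre1 ++ x1) ((pre2 ++ [b]) ++ x2) r))).
          + rewrite E_plus, E_const. reflexivity.
          + intros x1. rewrite E_plus, E_const. f_equal. apply E_ext. intros x2.
            simpl tab. rewrite <- H2, app_nth2, Nat.sub_diag by lia. simpl.
            rewrite <- app_assoc. reflexivity.
        - rewrite count_plays_app. simpl. lia.
        - rewrite length_app, count_plays_app. simpl. lia.
        - lia.
        - lia. }
      rewrite !Hb. simpl param. ring.
Qed.

Section Det.
Variable (sel : history -> arm) (x1 x2 : list bool).

Fixpoint hist (s : nat) : history :=
  match s with
  | O => []
  | S s => let h := hist s in
      h ++ [(sel h, nth (count_plays (sel h) h) (tab x1 x2 (sel h)) false)]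
  end.

Lemma sumR_shift r f : sumR (S r) f = f O + sumR r (fun j => f (S j)).
Proof.
  induction r.
  - simpl. ring.
  - change (sumR (S (S r)) f) with (sumR (S r) f + f (S r)). rewrite IHr. simpl. ring.
Qed.

Lemma sumR_ext n f g : (forall k, (k < n)%nat -> f k = g k) -> sumR n f = sumR n g.
Proof.
  induction n; intros H; simpl; auto.
  f_equal; [apply IHn; intros; apply H; lia| apply H; lia].
Qed.

Lemma cntN_hist i : forall r s, cntN sel i (hist s) x1 x2 r =
  sumR r (fun j => if arm_eqb (sel (hist (s + j))) i then 1 else 0).
Proof.
  induction r; intros s.
  - reflexivity.
  - rewrite sumR_shift. cbn [cntN]. rewrite Nat.add_0_r.
    change (hist s ++ _) with (hist (S s)). rewrite IHr. f_equal.
    apply sumR_ext. intros k _. replace (S s + k)%nat with (s + S k)%nat by lia. reflexivity.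
Qed.

Lemma hist_len s : length (hist s) = s.
Proof. induction s; simpl; auto. rewrite length_app, IHs. simpl. lia. Qed.

Lemma arm_eqb_spec a b : arm_eqb a b = true <-> a = b.
Proof. destruct a, b; simpl; split; congruence. Qed.

Lemma hist_ones a s : count_ones a (hist s) = Sc (count_plays a (hist s)) (tab x1 x2 a).
Proof.
  induction s; [reflexivity|].
  change (hist (S s)) with (hist s ++ [(sel (hist s), nth (count_plays (sel (hist s)) (hist s)) (tab x1 x2 (sel (hist s))) false)]).
  rewrite count_ones_app, count_plays_app, IHs.
  destruct (arm_eqb (sel (hist s)) a) eqn:He.
  - apply arm_eqb_spec in He. rewrite He. simpl andb.
    rewrite Nat.add_1_r, Sc_succ. destruct (nth _ _ _); reflexivity.
  - simpl andb. rewrite !Nat.add_0_r. reflexivity.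
Qed.

Lemma count_plays_le a h : (count_plays a h <= length h)%nat.
Proof. unfold count_plays. induction h; simpl; [lia|]. destruct (arm_eqb _ _); simpl; lia. Qed.

Lemma count_plays_hist_S a s : count_plays a (hist (S s)) =
  (count_plays a (hist s) + if arm_eqb (sel (hist s)) a then 1 else 0)%nat.
Proof. apply count_plays_app. Qed.

End Det.

Definition idx alpha n x s' :=
  hb (INR (Sc n x) / INR n) + ucd_ber_half (INR (Sc n x) / INR n) (delta_alpha alpha s') n.
Definition bad1 alpha c n x s' : R :=
  if Nat.eq_dec n 0 then 0 else if Rlt_dec (idx alpha n x s') c then 1 else 0.
Definition bad2 alpha c u n x s' : R :=
  if Nat.eq_dec n 0 then 0 else if Compare_dec.le_lt_dec u n then (if Rle_dec c (idx alpha n x s') then 1 else 0) else 0.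

Lemma bad1_nonneg alpha c n x s' : 0 <= bad1 alpha c n x s'.
Proof. unfold bad1. destruct (Nat.eq_dec _ _); [lra|]. destruct (Rlt_dec _ _); lra. Qed.
Lemma bad2_nonneg alpha c u n x s' : 0 <= bad2 alpha c u n x s'.
Proof. unfold bad2. destruct (Nat.eq_dec _ _); [lra|]. destruct (Compare_dec.le_lt_dec _ _); [|lra]. destruct (Rle_dec _ _); lra. Qed.

Section Det2.
Variable (sel : history -> arm) (x1 x2 : list bool).

Lemma ucb_hist alpha a s :
  ucb_index alpha a (hist sel x1 x2 s) = idx alpha (count_plays a (hist sel x1 x2 s)) (tab x1 x2 a) (S s).
Proof. unfold ucb_index, phat, idx. rewrite hist_ones, hist_len. reflexivity. Qed.

Lemma low_bound u : forall r,
  sumR r (fun j => if arm_eqb (sel (hist sel x1 x2 j)) A2 then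
                      (if Compare_dec.lt_dec (count_plays A2 (hist sel x1 x2 j)) u then 1 else 0) else 0)
  <= INR (Nat.min (count_plays A2 (hist sel x1 x2 r)) u).
Proof.
  induction r.
  - simpl. lra.
  - simpl sumR. rewrite count_plays_hist_S.
    destruct (arm_eqb (sel (hist sel x1 x2 r)) A2).
    + destruct (Compare_dec.lt_dec (count_plays A2 (hist sel x1 x2 r)) u).
      * replace (Nat.min (count_plays A2 (hist sel x1 x2 r) + 1) u) with (S (Nat.min (count_plays A2 (hist sel x1 x2 r)) u)) by lia.
        rewrite S_INR. lra.
      * replace (Nat.min (count_plays A2 (hist sel x1 x2 r) + 1) u) with (Nat.min (count_plays A2 (hist sel x1 x2 r)) u) by lia. lra.
    + rewrite Nat.add_0_r. lra.
Qed.

Lemma det_bound alpha c u t : (1 <= u)%nat ->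
  (forall h, is_ucb_choice alpha h (sel h)) ->
  sumR t (fun j => if arm_eqb (sel (hist sel x1 x2 j)) A2 then 1 else 0) <=
  INR u + sumR t (fun j => sumR (S j) (fun n => bad1 alpha c n x1 (S j) + bad2 alpha c u n x2 (S j))).
Proof.
  intros Hu Hsel.
  set (low := fun j => if arm_eqb (sel (hist sel x1 x2 j)) A2 then
                      (if Compare_dec.lt_dec (count_plays A2 (hist sel x1 x2 j)) u then 1 else 0) else 0).
  apply Rle_trans with (sumR t low + sumR t (fun j => sumR (S j) (fun n => bad1 alpha c n x1 (S j) + bad2 alpha c u n x2 (S j)))).
  - rewrite <- sumR_plus. apply sumR_le. intros j Hj.
    assert (HB : 0 <= sumR (S j) (fun n => bad1 alpha c n x1 (S j) + bad2 alpha c u n x2 (S j))).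
    { apply sumR_nonneg. intros. pose proof (bad1_nonneg alpha c k x1 (S j)). pose proof (bad2_nonneg alpha c u k x2 (S j)). lra. }
    unfold low. destruct (arm_eqb (sel (hist sel x1 x2 j)) A2) eqn:Ha; [|lra].
    destruct (Compare_dec.lt_dec (count_plays A2 (hist sel x1 x2 j)) u); [lra|].
    apply arm_eqb_spec in Ha.
    pose proof (Hsel (hist sel x1 x2 j)) as Hc. unfold is_ucb_choice in Hc. rewrite Ha in Hc.
    destruct Hc as [Hc|[Hc1 Hc2]]; [lia|]. simpl other in Hc1, Hc2.
    rewrite !ucb_hist in Hc2. simpl tab in Hc2.
    pose proof (count_plays_le A1 (hist sel x1 x2 j)). pose proof (count_plays_le A2 (hist sel x1 x2 j)).
    rewrite hist_len in *.
    set (N1 := count_plays A1 (hist sel x1 x2 j)) in *.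
    set (N2 := count_plays A2 (hist sel x1 x2 j)) in *.
    assert (Hnn : forall k, (k < S j)%nat -> 0 <= bad1 alpha c k x1 (S j) + bad2 alpha c u k x2 (S j)).
    { intros. pose proof (bad1_nonneg alpha c k x1 (S j)). pose proof (bad2_nonneg alpha c u k x2 (S j)). lra. }
    destruct (Rlt_dec (idx alpha N1 x1 (S j)) c).
    + pose proof (sumR_ge_term (S j) _ N1 Hnn ltac:(lia)) as Ht. cbv beta in Ht.
      assert (bad1 alpha c N1 x1 (S j) = 1).
      { unfold bad1. destruct (Nat.eq_dec N1 0); [lia|]. destruct (Rlt_dec _ _); [reflexivity|lra]. }
      pose proof (bad2_nonneg alpha c u N1 x2 (S j)). lra.
    + pose proof (sumR_ge_term (S j) _ N2 Hnn ltac:(lia)) as Ht. cbv beta in Ht.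
      assert (bad2 alpha c u N2 x2 (S j) = 1).
      { unfold bad2. destruct (Nat.eq_dec N2 0); [lia|]. destruct (Compare_dec.le_lt_dec u N2); [|lia].
        destruct (Rle_dec _ _); [reflexivity|lra]. }
      pose proof (bad1_nonneg alpha c N2 x1 (S j)). lra.
  - apply Rplus_le_compat_r. eapply Rle_trans. apply low_bound.
    apply le_INR. lia.
Qed.
End Det2.

Lemma tail2 p L n r : 2/5 <= p <= 1/2 -> 0 <= r <= 29/100 -> (1 <= n <= L)%nat ->
  E p L (fun x => if Rle_dec r (Rabs (INR (Sc n x) / INR n - p)) then 1 else 0)
  <= 2 * exp (- (INR n * r^2)).
Proof.
  intros Hp Hr Hn.
  assert (Hn0 : 0 < INR n) by (apply lt_0_INR; lia).
  apply Rle_trans with (E p L (fun x =>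
      (if Rle_dec (INR n * (2 * r^2)) ((2 * r) * (INR (Sc n x) - INR n * p)) then 1 else 0) +
      (if Rle_dec (INR n * (2 * r^2)) ((- (2 * r)) * (INR (Sc n x) - INR n * p)) then 1 else 0))).
  - apply E_le; [lra|]. intros x.
    destruct (Rle_dec r _) as [Hle|Hle];
      [|destruct (Rle_dec _ _); destruct (Rle_dec _ _); lra].
    assert (Hq : INR (Sc n x) - INR n * p = INR n * (INR (Sc n x) / INR n - p)) by (field; lra).
    rewrite Hq.
    destruct (Rle_dec 0 (INR (Sc n x) / INR n - p)).
    + rewrite Rabs_right in Hle by lra.
      destruct (Rle_dec (INR n * (2 * r ^ 2)) (2 * r * (INR n * (INR (Sc n x) / INR n - p)))) as [|Hf].
      * destruct (Rle_dec _ _); lra.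
      * exfalso. apply Hf. assert (0 <= INR n * r * (INR (Sc n x) / INR n - p - r)).
        { apply Rmult_le_pos; [apply Rmult_le_pos|]; lra. } nra.
    + rewrite Rabs_left in Hle by lra.
      destruct (Rle_dec (INR n * (2 * r ^ 2)) (- (2 * r) * (INR n * (INR (Sc n x) / INR n - p)))) as [|Hf].
      * destruct (Rle_dec _ _); lra.
      * exfalso. apply Hf. assert (0 <= INR n * r * (- (INR (Sc n x) / INR n - p) - r)).
        { apply Rmult_le_pos; [apply Rmult_le_pos|]; lra. } nra.
  - rewrite E_plus. 
    pose proof (chernoff_tail p L n (2 * r) (2 * r^2) ltac:(lra) ltac:(nra) ltac:(nra) ltac:(lia)).
    pose proof (chernoff_tail p L n (- (2 * r)) (2 * r^2) ltac:(lra) ltac:(nra) ltac:(nra) ltac:(lia)).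
    replace (INR n * ((2 * r) ^ 2 / 4) - INR n * (2 * r ^ 2)) with (- (INR n * r^2)) in * by field.
    replace (INR n * ((- (2 * r)) ^ 2 / 4) - INR n * (2 * r ^ 2)) with (- (INR n * r^2)) in * by field.
    lra.
Qed.

Lemma ln_delta alpha s' : (1 <= s')%nat -> ln (4 / delta_alpha alpha s') = alpha * ln (INR s').
Proof.
  intros Hs. unfold delta_alpha, Rpower.
  replace (4 / (4 * exp (- alpha * ln (INR s')))) with (exp (alpha * ln (INR s'))).
  - apply ln_exp.
  - replace (- alpha * ln (INR s')) with (- (alpha * ln (INR s'))) by ring.
    rewrite exp_Ropp. field. pose proof (exp_pos (alpha * ln (INR s'))). lra.
Qed.

Lemma Lv_nonneg alpha s' : 0 <= alpha -> (1 <= s')%nat -> 0 <= alpha * ln (INR s').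
Proof.
  intros Ha Hs. apply Rmult_le_pos; auto. rewrite <- ln_1. apply Rcomplements.ln_le; [lra|].
  apply (le_INR 1). auto.
Qed.

Lemma idx_eq alpha n x s' : 0 <= alpha -> (1 <= s')%nat -> (1 <= n)%nat ->
  idx alpha n x s' =
  hb (INR (Sc n x) / INR n) + 7 * Rabs (1/2 - INR (Sc n x) / INR n) * sqrt (alpha * ln (INR s') / INR n)
  + 9 * (sqrt (alpha * ln (INR s') / INR n))^2.
Proof.
  intros Ha Hs Hn. unfold idx, ucd_ber_half. rewrite ln_delta by auto.
  assert (0 < INR n) by (apply lt_0_INR; lia).
  pose proof (Lv_nonneg alpha s' Ha Hs).
  rewrite <- Rsqr_pow2, Rsqr_sqrt.
  - unfold Rdiv. ring.
  - apply Rmult_le_pos; [lra|]. left; apply Rinv_0_lt_compat; lra.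
Qed.

Lemma q_range n x : (1 <= n)%nat -> 0 <= INR (Sc n x) / INR n <= 1.
Proof.
  intros Hn. assert (0 < INR n) by (apply lt_0_INR; lia).
  pose proof (pos_INR (Sc n x)). pose proof (le_INR _ _ (Sc_le n x)).
  split.
  - apply Rmult_le_pos; [lra|]. left; apply Rinv_0_lt_compat; lra.
  - apply (Rmult_le_reg_r (INR n)); [lra|]. unfold Rdiv. rewrite Rmult_assoc, Rinv_l; lra.
Qed.

Lemma P1 alpha p1 n L s' : 2/5 <= p1 <= 1/2 -> 0 <= alpha -> (1 <= s')%nat -> (1 <= n <= L)%nat ->
  E p1 L (fun x => bad1 alpha (hb p1) n x s') <= 2 * exp (- (alpha * ln (INR s'))).
Proof.
  intros Hp Ha Hs Hn.
  assert (Hn0 : 0 < INR n) by (apply lt_0_INR; lia).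
  pose proof (Lv_nonneg alpha s' Ha Hs) as HLv.
  set (Lv := alpha * ln (INR s')) in *.
  set (r := sqrt (Lv / INR n)).
  assert (Hr0 : 0 <= r) by apply sqrt_pos.
  assert (Hr2 : r^2 = Lv / INR n).
  { unfold r. rewrite <- Rsqr_pow2, Rsqr_sqrt; auto. apply Rmult_le_pos; [lra|]. left; apply Rinv_0_lt_compat; lra. }
  assert (HnLv : INR n * r^2 = Lv) by (rewrite Hr2; field; lra).
  pose proof (exp_pos (- Lv)).
  destruct (Rle_dec (3/4) (9 * r^2)).
  - rewrite (E_ext _ _ _ (fun _ => 0)). rewrite E_const. lra.
    intros x. unfold bad1. destruct (Nat.eq_dec n 0); [reflexivity|].
    destruct (Rlt_dec _ _) as [Hlt|]; [|reflexivity]. exfalso.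
    rewrite idx_eq in Hlt by (auto; lia). fold Lv r in Hlt.
    pose proof (key1 p1 (INR (Sc n x) / INR n) r Hp (q_range n x ltac:(lia)) Hr0 (or_introl r0)). lra.
  - assert (Hr : r <= 29/100) by nra.
    rewrite <- HnLv.
    eapply Rle_trans; [|apply (tail2 p1 L n r); auto; lra].
    apply E_le; [lra|]. intros x. unfold bad1. destruct (Nat.eq_dec n 0); [lia|].
    destruct (Rle_dec _ _); [destruct (Rlt_dec _ _); lra|].
    destruct (Rlt_dec _ _) as [Hlt|]; [|lra]. exfalso.
    rewrite idx_eq in Hlt by (auto; lia). fold Lv r in Hlt.
    assert (Rabs (INR (Sc n x) / INR n - p1) < r) by lra.
    pose proof (key1 p1 (INR (Sc n x) / INR n) r Hp (q_range n x ltac:(lia)) Hr0 (or_intror H0)). lra.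
Qed.

Lemma sq_le a b : 0 <= a -> 0 <= b -> a^2 <= b^2 -> a <= b.
Proof. intros. destruct (Rle_dec a b); auto. nra. Qed.

Lemma P2 alpha p1 p2 D Lmax u n L s' : 2/5 <= p2 < 1/2 -> 0 < D -> D <= 3/4 -> hb p1 = hb p2 + D ->
  0 <= alpha -> (1 <= s')%nat -> (1 <= n <= L)%nat ->
  alpha * ln (INR s') <= Lmax ->
  (1/2 - p2)^2 * Lmax <= INR n * D^2 / 784 -> Lmax <= INR n * D / 60 ->
  E p2 L (fun x => bad2 alpha (hb p1) u n x s') <= 2 * exp (- (alpha * ln (INR s'))).
Proof.
  intros Hp HD HD2 Hh Ha Hs Hn HL H784 H60.
  assert (Hn0 : 0 < INR n) by (apply lt_0_INR; lia).
  pose proof (Lv_nonneg alpha s' Ha Hs) as HLv.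
  set (Lv := alpha * ln (INR s')) in *.
  set (r := sqrt (Lv / INR n)).
  assert (Hr0 : 0 <= r) by apply sqrt_pos.
  assert (Hr2 : r^2 = Lv / INR n).
  { unfold r. rewrite <- Rsqr_pow2, Rsqr_sqrt; auto. apply Rmult_le_pos; [lra|]. left; apply Rinv_0_lt_compat; lra. }
  assert (HnLv : INR n * r^2 = Lv) by (rewrite Hr2; field; lra).
  assert (Hr60 : r * r <= D / 60).
  { apply (Rmult_le_reg_l (INR n)); [lra|].
    replace (INR n * (r * r)) with Lv by (rewrite <- HnLv; ring). lra. }
  assert (Hr28 : (1/2 - p2) * r <= D / 28).
  { apply sq_le; [nra|lra|]. apply (Rmult_le_reg_l (INR n)); [lra|].
    replace (INR n * ((1/2 - p2) * r)^2) with ((1/2 - p2)^2 * (INR n * r^2)) by ring.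
    rewrite HnLv. assert (0 <= (1/2 - p2)^2) by apply pow2_ge_0.
    apply Rle_trans with ((1/2 - p2)^2 * Lmax); [apply Rmult_le_compat_l; lra|]. lra. }
  assert (Hr : r <= 29/100) by nra.
  pose proof (exp_pos (- Lv)).
  rewrite <- HnLv.
  eapply Rle_trans; [|apply (tail2 p2 L n r); auto; lra].
  apply E_le; [lra|]. intros x. unfold bad2. destruct (Nat.eq_dec n 0); [lia|].
  destruct (Rle_dec r _); [destruct (Compare_dec.le_lt_dec _ _); [destruct (Rle_dec _ _)|]; lra|].
  destruct (Compare_dec.le_lt_dec _ _); [|lra].
  destruct (Rle_dec _ _) as [Hle|]; [|lra]. exfalso.
  rewrite idx_eq in Hle by (auto; lia). fold Lv r in Hle.
  assert (Rabs (INR (Sc n x) / INR n - p2) < r) by lra.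
  pose proof (key2 p2 D r (INR (Sc n x) / INR n) Hp HD Hr0 Hr28 Hr60 (q_range n x ltac:(lia)) H0).
  lra.
Qed.

Lemma ln_le_sub1 z : 0 < z -> ln z <= z - 1.
Proof. intros. pose proof (exp_ineq1_le (ln z)). rewrite exp_ln in H0; lra. Qed.

Lemma term_bound alpha s : 2 < alpha -> 1 <= s ->
  s * exp (- (alpha * ln (s + 1))) <=
  (exp (- ((alpha - 2) * ln s)) - exp (- ((alpha - 2) * ln (s + 1)))) / (alpha - 2).
Proof.
  intros Ha Hs. set (b := alpha - 2). set (A := ln (s + 1)). set (B := ln s).
  assert (Hab : B - A <= - / (s + 1)).
  { unfold A, B. rewrite <- ln_div by lra. eapply Rle_trans. apply ln_le_sub1.
    apply Rdiv_lt_0_compat; lra. right. field. lra. }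
  assert (H1 : exp (- (b * B)) >= exp (- (b * A)) * (1 + b / (s + 1))).
  { replace (- (b * B)) with (- (b * A) + b * (A - B)) by ring. rewrite exp_plus.
    apply Rle_ge. apply Rmult_le_compat_l; [left; apply exp_pos|].
    eapply Rle_trans; [|apply exp_ineq1_le].
    assert (b / (s + 1) <= b * (A - B)).
    { unfold Rdiv. apply Rmult_le_compat_l; unfold b; lra. } lra. }
  assert (H2 : exp (- (alpha * A)) = exp (- (b * A)) * / ((s + 1) * (s + 1))).
  { replace (- (alpha * A)) with (- (b * A) + - (A + A)) by (unfold b; ring).
    rewrite exp_plus. f_equal. rewrite exp_Ropp, exp_plus. unfold A. rewrite exp_ln by lra. reflexivity. }
  rewrite H2. set (E1 := exp (- (b * A))) in *. assert (HE : 0 < E1) by apply exp_pos.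
  set (w := / (s + 1)) in *.
  assert (Hw : 0 < w) by (apply Rinv_0_lt_compat; lra).
  assert (Hsw : s * w <= 1) by (unfold w; apply (Rmult_le_reg_r (s + 1)); [lra|]; rewrite Rmult_assoc, Rinv_l by lra; lra).
  assert (Hww : / ((s + 1) * (s + 1)) = w * w) by (unfold w; rewrite Rinv_mult; reflexivity).
  rewrite Hww.
  assert (Hb : 0 < b) by (unfold b; lra).
  apply (Rmult_le_reg_r b); [lra|].
  replace ((exp (- (b * B)) - E1) / b * b) with (exp (- (b * B)) - E1) by (field; lra).
  assert (b / (s + 1) = b * w) by reflexivity.
  assert (s * (E1 * (w * w)) * b <= E1 * (b * w)).
  { assert (0 <= E1 * b * w * (1 - s * w)) by (apply Rmult_le_pos; [apply Rmult_le_pos; [nra|lra]|lra]). nra. }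
  nra.
Qed.

Lemma sum_bound alpha t : 2 < alpha -> (1 <= t)%nat ->
  sumR t (fun j => INR j * exp (- (alpha * ln (INR (S j))))) <=
  (1 - exp (- ((alpha - 2) * ln (INR t)))) / (alpha - 2).
Proof.
  intros Ha Ht. induction t as [|t IH]; [lia|].
  destruct (Nat.eq_dec t 0) as [->|Hne].
  - simpl. rewrite ln_1. replace (- ((alpha - 2) * 0)) with 0 by ring. rewrite exp_0.
    replace ((1 - 1) / (alpha - 2)) with 0 by (field; lra). lra.
  - change (sumR (S t) (fun j => INR j * exp (- (alpha * ln (INR (S j)))))) with
      (sumR t (fun j => INR j * exp (- (alpha * ln (INR (S j))))) + INR t * exp (- (alpha * ln (INR (S t))))).
    rewrite !S_INR. eapply Rle_trans. apply Rplus_le_compat. apply IH; lia.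
    apply term_bound; auto. apply (le_INR 1). lia.
    right. field. lra.
Qed.

Lemma sumR_scal n c f : sumR n (fun k => c * f k) = c * sumR n f.
Proof. induction n; simpl; [ring|]. rewrite IHn. ring. Qed.

Lemma E2_sum p1 p2 L c n (m : nat -> nat) (g1 g2 : nat -> nat -> list bool -> R) :
  E p1 L (fun x1 => E p2 L (fun x2 => c + sumR n (fun j => sumR (m j) (fun k => g1 j k x1 + g2 j k x2)))) =
  c + sumR n (fun j => sumR (m j) (fun k => E p1 L (g1 j k) + E p2 L (g2 j k))).
Proof.
  rewrite (E_ext p1 L _ (fun x1 => c + sumR n (fun j => sumR (m j) (fun k => g1 j k x1 + E p2 L (g2 j k))))).
  - rewrite E_plus, E_const. f_equal. rewrite E_sum. apply sumR_ext. intros j _.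
    rewrite E_sum. apply sumR_ext. intros k _. rewrite E_plus, E_const. reflexivity.
  - intros x1. rewrite E_plus, E_const. f_equal. rewrite E_sum. apply sumR_ext. intros j _.
    rewrite E_sum. apply sumR_ext. intros k _. rewrite E_plus, E_const. reflexivity.
Qed.

Lemma exists_ceil U : 0 <= U -> exists u : nat, U <= INR u <= U + 1.
Proof.
  intros HU. destruct (archimed U) as [H1 H2].
  assert (Hz : (0 <= up U)%Z) by (apply le_IZR; lra).
  exists (Z.to_nat (up U)). rewrite INR_IZR_INZ, Znat.Z2Nat.id by auto. lra.
Qed.

Theorem theorem4 (p1 p2 alpha : R) (sel : history -> arm) (t : nat) :
  2/5 <= p1 <= 1/2 -> 2/5 <= p2 <= 1/2 -> p2 < p1 -> p1 < 1/2 ->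
  2 < alpha ->
  (forall h : history, is_ucb_choice alpha h (sel h)) ->
  (2 <= t)%nat ->
  regret (param p1 p2) sel t <=
    784 * (1/2 - p2) ^ 2 * alpha * ln (INR t) / (hb p1 - hb p2)
    + 60 * alpha * ln (INR t)
    + 8 * (alpha - 1) / (alpha - 2) * (hb p1 - hb p2).
Proof.
  intros Hp1 Hp2 H21 Hp1h Ha Hsel Ht.
  assert (HD : hb p2 < hb p1) by (apply hb_mono_strict; lra).
  set (D := hb p1 - hb p2).
  assert (HD0 : 0 < D) by (unfold D; lra).
  assert (HD1 : D <= 3/4).
  { unfold D. pose proof (hb_le_ln2 p1 ltac:(lra)). pose proof ln2_le. pose proof (hb_nonneg p2 ltac:(lra)). lra. }
  assert (Hlnt : 0 < ln (INR t)).
  { rewrite <- ln_1. apply ln_increasing; [lra|]. apply (lt_INR 1). lia. }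
  set (Lt := alpha * ln (INR t)).
  assert (HLt : 0 < Lt) by (unfold Lt; nra).
  set (U := 784 * (1/2 - p2)^2 * Lt / D^2 + 60 * Lt / D).
  assert (HU1 : 0 <= 784 * (1/2 - p2)^2 * Lt / D^2).
  { apply Rmult_le_pos; [|left; apply Rinv_0_lt_compat; nra]. apply Rmult_le_pos; [|lra].
    pose proof (pow2_ge_0 (1/2 - p2)). lra. }
  assert (HU2 : 0 < 60 * Lt / D) by (apply Rdiv_lt_0_compat; lra).
  destruct (exists_ceil U) as [u [Hu1 Hu2]]; [unfold U; lra|].
  assert (Hu : (1 <= u)%nat).
  { destruct u; [|lia]. simpl in Hu1. unfold U in Hu1. lra. }
  assert (Hreg : regret (param p1 p2) sel t = expected_N (param p1 p2) sel A2 t * D).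
  { unfold regret, gap, entropy. simpl param. rewrite Rmax_left by lra.
    destruct (Rlt_dec 0 (hb p1 - hb p1)); [lra|].
    destruct (Rlt_dec 0 (hb p1 - hb p2)); [|lra]. unfold D. ring. }
  assert (HEN : expected_N (param p1 p2) sel A2 t <= INR u + 4 / (alpha - 2)).
  { unfold expected_N. rewrite (equiv p1 p2 sel A2 t [] [] [] t t) by (simpl; auto).
    eapply Rle_trans.
    { apply E_le; [lra|]. intros x1. apply E_le; [lra|]. intros x2.
      simpl app. change [] with (hist sel x1 x2 0). rewrite cntN_hist.
      apply (det_bound sel x1 x2 alpha (hb p1) u t Hu Hsel). }
    rewrite (E2_sum p1 p2 t (INR u) t S
      (fun j n x1 => bad1 alpha (hb p1) n x1 (S j)) (fun j n x2 => bad2 alpha (hb p1) u n x2 (S j))).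
    apply Rplus_le_compat_l.
    eapply Rle_trans.
    { apply sumR_le. intros j Hj. apply Rle_trans with
        (sumR (S j) (fun n => if Nat.eq_dec n 0 then 0 else 4 * exp (- (alpha * ln (INR (S j)))))).
      - apply sumR_le. intros n Hn. cbv beta. destruct (Nat.eq_dec n 0) as [->|Hn0].
        + change (fun x1 => bad1 alpha (hb p1) 0 x1 (S j)) with (fun _ : list bool => 0).
          change (fun x2 => bad2 alpha (hb p1) u 0 x2 (S j)) with (fun _ : list bool => 0).
          rewrite !E_const. lra.
        + pose proof (P1 alpha p1 n t (S j) Hp1 ltac:(lra) ltac:(lia) ltac:(lia)).
          assert (E p2 t (fun x => bad2 alpha (hb p1) u n x (S j)) <= 2 * exp (- (alpha * ln (INR (S j))))).
          { destruct (Compare_dec.le_lt_dec u n) as [Hun|Hun].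
            - apply (P2 alpha p1 p2 D Lt u n t (S j)); try lra; try lia.
              + unfold D. ring.
              + unfold Lt. apply Rmult_le_compat_l; [lra|]. apply Rcomplements.ln_le.
                apply lt_0_INR; lia. apply le_INR; lia.
              + assert (U <= INR n) by (apply Rle_trans with (INR u); auto; apply le_INR; lia).
                unfold U in H0. apply (Rmult_le_reg_r (/ D^2)); [apply Rinv_0_lt_compat; nra|].
                replace (INR n * D ^ 2 / 784 * / D ^ 2) with (INR n / 784) by (field; lra).
                lra.
              + assert (U <= INR n) by (apply Rle_trans with (INR u); auto; apply le_INR; lia).
                unfold U in H0. apply (Rmult_le_reg_r (/ D)); [apply Rinv_0_lt_compat; nra|].
                replace (INR n * D / 60 * / D) with (INR n / 60) by (field; lra).
                unfold Rdiv in *. lra.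
            - rewrite (E_ext _ _ _ (fun _ => 0)). rewrite E_const. pose proof (exp_pos (- (alpha * ln (INR (S j))))). lra.
              intros x. unfold bad2. destruct (Nat.eq_dec n 0); [reflexivity|].
              destruct (Compare_dec.le_lt_dec u n); [lia|reflexivity]. }
          lra.
      - rewrite sumR_indic. apply Rle_refl. }
    rewrite (sumR_ext t _ (fun j => 4 * (INR j * exp (- (alpha * ln (INR (S j))))))) by (intros; ring).
    rewrite sumR_scal.
    pose proof (sum_bound alpha t Ha ltac:(lia)).
    pose proof (exp_pos (- ((alpha - 2) * ln (INR t)))).
    assert ((1 - exp (- ((alpha - 2) * ln (INR t)))) / (alpha - 2) <= 1 / (alpha - 2)).
    { unfold Rdiv. apply Rmult_le_compat_r; [left; apply Rinv_0_lt_compat; lra|lra]. }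
    unfold Rdiv in *. lra. }
  rewrite Hreg. fold D.
  apply Rle_trans with ((U + 1 + 4 / (alpha - 2)) * D).
  - apply Rmult_le_compat_r; lra.
  - assert (HUD : U * D = 784 * (1/2 - p2) ^ 2 * alpha * ln (INR t) / D + 60 * alpha * ln (INR t)).
    { unfold U, Lt. field. lra. }
    assert (Hc : 1 + 4 / (alpha - 2) <= 8 * (alpha - 1) / (alpha - 2)).
    { apply (Rmult_le_reg_r (alpha - 2)); [lra|].
      replace ((1 + 4 / (alpha - 2)) * (alpha - 2)) with (alpha + 2) by (field; lra).
      replace (8 * (alpha - 1) / (alpha - 2) * (alpha - 2)) with (8 * (alpha - 1)) by (field; lra). lra. }
    assert ((1 + 4 / (alpha - 2)) * D <= 8 * (alpha - 1) / (alpha - 2) * D) by (apply Rmult_le_compat_r; lra).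
    replace ((U + 1 + 4 / (alpha - 2)) * D) with (U * D + (1 + 4 / (alpha - 2)) * D) by ring.
    rewrite HUD. lra.
Qed.
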